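(* Let $(B,\cdot,+,-,{}^{-1},0)$ be a right near-domain (as defined in the context), with $B_1=B\setminus\{0\}$, identity $e$ of the group $B_1$, $L(x)=0-x$ for $x\in B_1$, and let $h,r,v$ be elements as in axioms A5, A6, A7. Then: 1. $0\cdot x=0$ for every $x\in B_1$; 2. $h(x,y)=(L(x))^{-1}L(xy)$ for all $x,y\in B_1$; 3. for all $y,z\in B_1$ with $y+z\neq 0$, one has $L(z)-y\neq 0$ and $r(y,z)=(L(z)-y)^{-1}L(y+z)$; 4. $x-z=x\,(v(z))^{-1}+L(z)$ for all $x\in B$, $z\in B_1$; 5. $v(z)=(L(L(z)))^{-1}z$ for all $z\in B_1$.
   Context: A right near-domain is a set $B$ with a distinguished element $0\in B$, where $B_1:=B\setminus\{0\}$, together with maps $+:B\times B_1\to B$, $-:B\times B_1\to B$, $\cdot:B\times B_1\to B$ and ${}^{-1}:B_1\to B_1$, satisfying: A1. $(x-y)+y=x$ for all $x\in B$, $y\in B_1$; A2. $(x+y)-y=x$ for all $x\in B$, $y\in B_1$; A3. $x-x=0$ for all $x\in B_1$; A4. $B_1$ is closed under $\cdot$ and $(B_1,\cdot,{}^{-1})$ is a group, with identity element $e\in B_1$; A5. for all $y,z\in B_1$ there is $h(y,z)\in B_1$ such that $(x+y)z=x\,h(y,z)+yz$ for all $x\in B$; A6. for all $y,z\in B_1$ with $y+z\neq 0$ there is $r(y,z)\in B_1$ such that $(x+y)+z=x\,r(y,z)+(y+z)$ for all $x\in B$; A7. for all $z\in B_1$ there is $v(z)\in B_1$ such that $(x+(0-z))+z=x\,v(z)$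 for all $x\in B$ (it follows from A1–A3 that $0-z\neq 0$, so the left side is defined). Notation: $L(x)=0-x$ for $x\in B_1$ (so $L:B_1\to B_1$), and $xy$ denotes $x\cdot y$. *)

(* Defs.v *)
(* a right near-domain is encoded by a carrier type B with
   TOTAL operations; the axioms only constrain them when the second argument
   lies in B_1 = B \ {0} (values at a zero second argument are junk and never
   used).  *)

Set Implicit Arguments.
Section NearDomain.
Variables (B : Type) (zero : B)
  (add sub mul : B -> B -> B) (inv : B -> B) (e : B).

Definition Lmap (x : B) : B := sub zero x.

Definition is_h (h : B -> B -> B) : Prop :=
  forall y z, y <> zero -> z <> zero ->
    h y z <> zero /\ forall x, mul (add x y) z = add (mul x (h y z)) (mul y z).

Definition is_r (r : B -> B -> B) : Prop :=
  forall y z, y <> zero -> z <> zero -> add y z <> zero ->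
    r y z <> zero /\ forall x, add (add x y) z = add (mul x (r y z)) (add y z).

Definition is_v (v : B -> B) : Prop :=
  forall z, z <> zero ->
    v z <> zero /\ forall x, add (add x (sub zero z)) z = mul x (v z).

Definition right_near_domain : Prop :=
  (forall x y, y <> zero -> add (sub x y) y = x) /\
  (forall x y, y <> zero -> sub (add x y) y = x) /\
  (forall x, x <> zero -> sub x x = zero) /\
  (forall x y, x <> zero -> y <> zero -> mul x y <> zero) /\
  (forall x y z, x <> zero -> y <> zero -> z <> zero ->
      mul (mul x y) z = mul x (mul y z)) /\
  e <> zero /\
  (forall x, x <> zero -> mul e x = x /\ mul x e = x) /\
  (forall x, x <> zero ->
      inv x <> zero /\ mul x (inv x) = e /\ mul (inv x) x = e) /\
  (exists h, is_h h) /\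
  (exists r, is_r r) /\
  (exists v, is_v v).

End NearDomain.

(* Main.v *)
Require Import Defs.
From Stdlib Require Import Classical.

Theorem mainTheorem1 (B : Type) (zero : B)
  (add sub mul : B -> B -> B) (inv : B -> B) (e : B)
  (h r : B -> B -> B) (v : B -> B) :
  right_near_domain zero add sub mul inv e ->
  is_h zero add mul h -> is_r zero add mul r -> is_v zero add sub mul v ->
  (* 1 *) (forall x, x <> zero -> mul zero x = zero) /\
  (* 2 *) (forall x y, x <> zero -> y <> zero ->
             h x y = mul (inv (Lmap zero sub x)) (Lmap zero sub (mul x y))) /\
  (* 3 *) (forall y z, y <> zero -> z <> zero -> add y z <> zero ->
             sub (Lmap zero sub z) y <> zero /\
             r y z = mul (inv (sub (Lmap zero sub z) y)) (Lmap zero sub (add y z))) /\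
  (* 4 *) (forall x z, z <> zero ->
             sub x z = add (mul x (inv (v z))) (Lmap zero sub z)) /\
  (* 5 *) (forall z, z <> zero ->
             v z = mul (inv (Lmap zero sub (Lmap zero sub z))) z).
Proof.
  intros [A1 [A2 [A3 [Mc [As [He [Id [Iv _]]]]]]]] Hh Hr Hv.
  unfold Lmap, is_h, is_r, is_v in *.
  assert (Lnz : forall z, z <> zero -> sub zero z <> zero).
  { intros z Hz H. pose proof (A1 zero z Hz) as E1. pose proof (A1 z z Hz) as E2.
    rewrite A3 in E2 by exact Hz. rewrite H in E1. congruence. }
  assert (add0 : forall y, y <> zero -> add zero y = y).
  { intros y Hy. pose proof (A1 y y Hy) as E. rewrite A3 in E by exact Hy. exact E. }
  assert (cancel : forall a b c, a <> zero -> b <> zero -> c <> zero ->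
            mul a c = mul b c -> a = b).
  { intros a b c Ha Hb Hc E.
    destruct (Iv c Hc) as [Hic [Hc1 Hc2]].
    destruct (Id a Ha) as [_ Ea]. destruct (Id b Hb) as [_ Eb].
    rewrite <- Ea, <- Eb, <- Hc1, <- (As a c (inv c)), <- (As b c (inv c)) by auto.
    rewrite E. reflexivity. }
  assert (lsolve : forall a c d, a <> zero -> c <> zero -> mul a c = d ->
            c = mul (inv a) d).
  { intros a c d Ha Hc E. subst d. destruct (Iv a Ha) as [Hia [_ H2]].
    rewrite <- As by auto. rewrite H2. destruct (Id c Hc) as [E _]. auto. }
  assert (m0h : forall y z, y <> zero -> z <> zero -> mul zero (h y z) = zero).
  { intros y z Hy Hz. destruct (Hh y z Hy Hz) as [_ E].
    specialize (E zero). rewrite add0 in E by auto.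
    apply (f_equal (fun t => sub t (mul y z))) in E.
    rewrite A2 in E by auto. rewrite A3 in E by auto. auto. }
  assert (M0 : forall a, a <> zero -> mul zero a = zero).
  { intros a Ha. destruct (classic (mul zero a = zero)) as [|Hu]; auto. exfalso.
    destruct (Iv a Ha) as [Hia [Ha1 Ha2]].
    set (u := mul zero a) in *.
    set (w := sub (mul u (inv a)) e).
    destruct (Hh e a He Ha) as [Hhn E].
    pose proof (E w) as Ew. pose proof (E (sub zero e)) as EL.
    unfold w in Ew. rewrite A1 in Ew by auto. rewrite A1 in EL by auto.
    rewrite As, Ha2 in Ew by auto. destruct (Id u Hu) as [_ Eu]. rewrite Eu in Ew.
    fold w in Ew. fold u in EL. rewrite Ew in EL.
    apply (f_equal (fun t => sub t (mul e a))) in EL.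
    rewrite !A2 in EL by auto.
    destruct (classic (w = zero)) as [Hw|Hw].
    - rewrite Hw, m0h in EL by auto. symmetry in EL.
      revert EL. apply Mc; auto.
    - apply cancel in EL; auto. 
      apply (f_equal (fun t => add t e)) in EL. unfold w in EL.
      rewrite !A1 in EL by auto. revert EL. apply Mc; auto. }
  assert (As' : forall x a b, a <> zero -> b <> zero ->
            mul (mul x a) b = mul x (mul a b)).
  { intros x a b Ha Hb. destruct (classic (x = zero)) as [Hx|Hx].
    - subst x. rewrite !M0; auto.
    - apply As; auto. }
  split; [exact M0|]. split; [|split; [|split]].
  - intros x y Hx Hy. destruct (Hh x y Hx Hy) as [Hn E].
    specialize (E (sub zero x)). rewrite A1, M0 in E by auto.
    apply (f_equal (fun t => sub t (mul x y))) in E. rewrite A2 in E by auto.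
    apply lsolve; auto.
  - intros y z Hy Hz Hyz. destruct (Hr y z Hy Hz Hyz) as [Hn E].
    specialize (E (sub (sub zero z) y)). rewrite !A1 in E by auto.
    apply (f_equal (fun t => sub t (add y z))) in E. rewrite A2 in E by auto.
    assert (Hn2 : sub (sub zero z) y <> zero).
    { intro H0. rewrite H0, M0 in E by auto. apply (Lnz _ Hyz). auto. }
    split; auto.
  - intros x z Hz. destruct (Hv z Hz) as [Hn E].
    destruct (Iv _ Hn) as [Hi [_ H2]].
    specialize (E (mul x (inv (v z)))). rewrite As', H2 in E by auto.
    assert (Ex : mul x e = x).
    { destruct (classic (x = zero)) as [Hx|Hx]. subst; apply M0; auto. apply Id; auto. }
    rewrite Ex in E. rewrite <- E at 1. rewrite A2 by auto. reflexivity.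
  - intros z Hz. destruct (Hv z Hz) as [Hn E].
    specialize (E (sub zero (sub zero z))). rewrite A1, add0 in E by auto.
    apply lsolve; auto.
Qed.
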